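(* Let $k\ge1$, $s=2k+1$, and let $f:[-k,k]^2\to[n]^2$ be injective with number of tiles $|T(f)|=t+1\ge2$. Then $$\gamma(f)\ge t\Big(2-\frac{2}{s}\Big).$$ Moreover, if two tiles of $f$ have more than $35$ elements each, then $$\gamma(f)\ge 2t\Big(1-\frac1s\Big)+4.$$
   Context: Every vertex $x\in[n]^2$ has four incident edges $\uparrow(x),\downarrow(x),\rightarrow(x),\leftarrow(x)$, where $\rightarrow(i,j)=\leftarrow(i+1,j)$ is the edge between $(i,j)$ and $(i+1,j)$ and $\uparrow(i,j)=\downarrow(i,j+1)$ the edge between $(i,j)$ and $(i,j+1)$; for boundary vertices the edges leading out of $[n]^2$ are included. The tiles $T(f)$ of $f$ are the connected components of the graph on $f([-k,k]^2)$ in which $a,b$ are adjacent iff $a-b\in\{\pm(0,1),\pm(1,0)\}$. The constraint graph $G(f)=(V,E)$ is the multigraph whose vertices are grid edges and whose edge multiset consists of the pair $(\rightarrow(f(u)),\leftarrow(f(u+(1,0))))$ for each $u$ with $u,u+(1,0)\in[-k,k]^2$ and $f(u+(1,0))\neq f(u)+(1,0)$, and the pair $(\uparrow(f(u)),\downarrow(f(u+(0,1))))$ for each $u$ with $u,u+(0,1)\in[-k,k]^2$ and $f(u+(0,1))\ne f(u)+(0,1)$; $V$ is the set of grid edges appearing in some pair. $\gamma(f)=|V|-(\text{number of connected components of }G(f))$. *)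

(* Defs.v *)
From mathcomp Require Import all_boot all_order all_algebra.
Set Implicit Arguments. Unset Strict Implicit. Unset Printing Implicit Defensive.

(* Conventions:
   - [n] is represented by 'I_n = {0,..,n-1} (a translate of {1,..,n}).
   - [-k,k] is represented by 'I_(2k+1), coordinate a standing for a - k.
   - A grid edge is encoded as (b, a, c) : bool * 'I_(n+1) * 'I_(n+1):
       (false, a, c) = horizontal edge between (a-1, c) and (a, c)  (a in 0..n)
       (true,  c, a) = vertical   edge between (c, a-1) and (c, a)  (a in 0..n)
     so boundary edges leading out of [n]^2 are included. *)

Definition pt (n : nat) := ('I_n * 'I_n)%type.
Definition gedge (n : nat) := (bool * 'I_n.+1 * 'I_n.+1)%type.
Definition dom (k : nat) := ('I_(2 * k + 1) * 'I_(2 * k + 1))%type.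

Definition wid n (i : 'I_n) : 'I_n.+1 := widen_ord (leqnSn n) i.
Definition sc n (i : 'I_n) : 'I_n.+1 := lift ord0 i.

(* right(i,j) = edge {(i,j),(i+1,j)},  left(i,j) = edge {(i-1,j),(i,j)} *)
Definition eright n (x : pt n) : gedge n := (false, sc x.1, wid x.2).
Definition eleft  n (x : pt n) : gedge n := (false, wid x.1, wid x.2).
(* up(i,j) = edge {(i,j),(i,j+1)},  down(i,j) = edge {(i,j-1),(i,j)} *)
Definition eup    n (x : pt n) : gedge n := (true, wid x.1, sc x.2).
Definition edown  n (x : pt n) : gedge n := (true, wid x.1, wid x.2).

Section Constraint.
Variables (k n : nat) (f : dom k -> pt n).

Definition hconstr (x y : gedge n) : bool :=
  [exists u : dom k, exists v : dom k,
     [&& (v.1 == u.1.+1 :> nat), (v.2 == u.2),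
         ~~ (((f v).1 == (f u).1.+1 :> nat) && ((f v).2 == (f u).2)),
         x == eright (f u) & y == eleft (f v)]].

Definition vconstr (x y : gedge n) : bool :=
  [exists u : dom k, exists v : dom k,
     [&& (v.1 == u.1), (v.2 == u.2.+1 :> nat),
         ~~ (((f v).1 == (f u).1) && ((f v).2 == (f u).2.+1 :> nat)),
         x == eup (f u) & y == edown (f v)]].

Definition Gadj (x y : gedge n) : bool :=
  [|| hconstr x y, hconstr y x, vconstr x y | vconstr y x].

Definition Gverts : {set gedge n} := [set x | [exists y, Gadj x y]].

Definition Gcomps : {set {set gedge n}} :=
  [set [set y in Gverts | connect Gadj x y] | x in Gverts].

Definition gamma : nat := #|Gverts| - #|Gcomps|.

Definition img : {set pt n} := [set f u | u : dom k].

Definition gridadj (p q : pt n) : bool :=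
  [|| ((p.1 : nat) == q.1.+1) && (p.2 == q.2),
      ((q.1 : nat) == p.1.+1) && (p.2 == q.2),
      ((p.2 : nat) == q.2.+1) && (p.1 == q.1) |
      ((q.2 : nat) == p.2.+1) && (p.1 == q.1)].

Definition imgadj (p q : pt n) : bool :=
  [&& p \in img, q \in img & gridadj p q].

Definition tiles : {set {set pt n}} :=
  [set [set q in img | connect imgadj p q] | p in img].

End Constraint.

(* Main.v *)
Require Import Defs.
From mathcomp Require Import all_boot all_order all_algebra.
From mathcomp Require Import zify ring lra.
Import Order.TTheory GRing.Theory Num.Theory.
Set Implicit Arguments. Unset Strict Implicit. Unset Printing Implicit Defensive.

Definition cd (d : bool) m (u : 'I_m * 'I_m) : 'I_m := if d then u.2 else u.1.
Definition od (d : bool) m (u : 'I_m * 'I_m) : 'I_m := if d then u.1 else u.2.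
Definition succ (d : bool) m (v u : 'I_m * 'I_m) : bool :=
  ((cd d v : nat) == (cd d u).+1) && (od d v == od d u).
Definition mkc (d : bool) m (a b : 'I_m) : 'I_m * 'I_m := if d then (b, a) else (a, b).

Lemma cd_mkc d m (a b : 'I_m) : cd d (mkc d a b) = a.
Proof. by case: d. Qed.
Lemma od_mkc d m (a b : 'I_m) : od d (mkc d a b) = b.
Proof. by case: d. Qed.

Lemma pair_eqc d m (u v : 'I_m * 'I_m) : cd d u = cd d v -> od d u = od d v -> u = v.
Proof. by case: d; case: u => a b; case: v => c e /= -> ->. Qed.

Lemma succ_uniq_l d m (u v w : 'I_m * 'I_m) : succ d v u -> succ d w u -> v = w.
Proof.
move=> /andP[/eqP h1 /eqP h2] /andP[/eqP h3 /eqP h4].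
apply: (pair_eqc (d:=d)); [apply: val_inj => /=; lia | by rewrite h2 h4].
Qed.
Lemma succ_uniq_r d m (u v w : 'I_m * 'I_m) : succ d v u -> succ d v w -> u = w.
Proof.
move=> /andP[/eqP h1 /eqP h2] /andP[/eqP h3 /eqP h4].
apply: (pair_eqc (d:=d)); [apply: val_inj => /=; lia | by rewrite -h2 h4].
Qed.

Lemma pred_ex d m (v : 'I_m * 'I_m) : 0 < cd d v -> exists u, succ d v u.
Proof.
move=> h.
have hu : (cd d v).-1 < m by have := ltn_ord (cd d v); lia.
exists (mkc d (Ordinal hu) (od d v)).
by rewrite /succ cd_mkc od_mkc /= eqxx andbT; apply/eqP; lia.
Qed.

Definition eA (d : bool) n (p : pt n) : gedge n := if d then eup p else eright p.
Definition eB (d : bool) n (p : pt n) : gedge n := if d then edown p else eleft p.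

Lemma wid_inj n : injective (@wid n).
Proof. by move=> i j /(congr1 val) /= /val_inj. Qed.
Lemma sc_inj n : injective (@sc n).
Proof. by move=> i j /(congr1 val) /= [] /val_inj. Qed.

Lemma eA_inj d n : injective (@eA d n).
Proof.
case: d => -[a b] [c e]; rewrite /eA /eup /eright => /eqP; rewrite !xpair_eqE -!val_eqE /=
  => /andP[h1 h2]; congr (_, _); apply: val_inj => /=; move: h1 h2; rewrite /bump /=; lia.
Qed.
Lemma eB_inj d n : injective (@eB d n).
Proof.
case: d => -[a b] [c e]; rewrite /eB /edown /eleft => /eqP; rewrite !xpair_eqE -!val_eqE /=
  => /andP[h1 h2]; congr (_, _); apply: val_inj => /=; move: h1 h2; rewrite /bump /=; lia.
Qed.

Lemma eAB d n (p q : pt n) : (eA d p == eB d q) = succ d q p.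
Proof.
case: d; rewrite /eA /eB /eup /edown /eright /eleft /succ /cd /od !xpair_eqE -!val_eqE /= /bump /=;
apply/andP/andP => -[/eqP h1 /eqP h2]; split; apply/eqP; lia.
Qed.

Lemma eA1 d n (p : pt n) : (eA d p).1.1 = d.
Proof. by case: d. Qed.
Lemma eB1 d n (p : pt n) : (eB d p).1.1 = d.
Proof. by case: d. Qed.

Lemma gridadj_sym n : symmetric (@gridadj n).
Proof.
move=> p q; rewrite /gridadj.
by apply/idP/idP => /or4P[] /andP[/eqP h1 /eqP h2]; rewrite h1 h2 ?eqxx ?andbT ?orbT.
Qed.

Lemma succ_adj d n (p q : pt n) : succ d q p -> gridadj p q.
Proof.
case: d; rewrite /succ /cd /od /gridadj => /andP[h1 /eqP h2];
by rewrite h1 h2 eqxx ?orbT.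
Qed.
Lemma arith1 (s P m : nat) : 2 <= P -> P <= 2 * s -> 4 * m <= P * P ->
  2 * m + 2 * s <= P * (s + 1).
Proof. move=> h1 h2 h3. nia. Qed.

Lemma arith_ab (s a b m : nat) : 1 <= m -> m <= a * b -> a <= s -> b <= s ->
  [/\ 2 <= a + b, a + b <= 2 * s & 4 * m <= (a + b) * (a + b)].
Proof.
move=> h1 h2 h3 h4.
have : 0 < a * b by lia.
rewrite muln_gt0 => /andP[ha hb].
have hsq : 4 * (a * b) <= (a + b) * (a + b).
  case: (leqP a b) => hab.
    have -> : b = a + (b - a) by lia.
    nia.
  have -> : a = b + (a - b) by lia.
  nia.
split; lia.
Qed.

Lemma arith_min (s a b m : nat) : 1 <= m -> m <= a * b -> m <= s * s -> 1 <= s ->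
  [/\ 2 <= minn (a + b) (2 * s), minn (a + b) (2 * s) <= 2 * s &
      4 * m <= minn (a + b) (2 * s) * minn (a + b) (2 * s)].
Proof.
move=> h1 h2 h3 h4.
have : 0 < a * b by lia.
rewrite muln_gt0 => /andP[ha hb].
have hsq : 4 * (a * b) <= (a + b) * (a + b).
  case: (leqP a b) => hab.
    have -> : b = a + (b - a) by lia.
    nia.
  have -> : a = b + (a - b) by lia.
  nia.
have h4m : 4 * m <= 4 * (a * b) by apply: leq_mul.
have h4s : 4 * m <= (2 * s) * (2 * s).
  by rewrite mulnACA; apply: leq_mul.
rewrite /minn; case: (ltnP (a + b) (2 * s)) => h /=; split; try lia.
all: first [exact: leq_trans h4m hsq | exact: h4s].
Qed.

Lemma aux_sq (S2 P : nat) : 12 <= P -> P + 5 <= S2 ->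
  P * P + 12 * S2 <= P * S2 + 7 * P + 60.
Proof.
move=> h1 h2.
have [x hx] : exists x, P = x + 12 by exists (P - 12); lia.
have [y hy] : exists y, S2 = x + y + 17 by exists (S2 - P - 5); lia.
subst P S2; nia.
Qed.

Lemma arith_pair (s P1 P2 m1 m2 : nat) :
  2 <= P1 -> P1 <= 2 * s -> 4 * m1 <= P1 * P1 ->
  2 <= P2 -> P2 <= 2 * s -> 4 * m2 <= P2 * P2 ->
  36 <= m1 -> 36 <= m2 -> m1 + m2 <= s * s ->
  (2 * m1 + 2 * s) + (2 * m2 + 2 * s) + (4 * s + 4) <= P1 * (s + 1) + P2 * (s + 1).
Proof.
move=> a1 a2 a3 b1 b2 b3 c1 c2 c3.
have hs : 9 <= s.
  case: (leqP 9 s) => // hs.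
  have : s * s <= 8 * 8 by apply: leq_mul; lia.
  lia.
have hP1 : 12 <= P1.
  case: (leqP 12 P1) => // hp.
  have : P1 * P1 <= 11 * 11 by apply: leq_mul; lia.
  lia.
have hP2 : 12 <= P2.
  case: (leqP 12 P2) => // hp.
  have : P2 * P2 <= 11 * 11 by apply: leq_mul; lia.
  lia.
rewrite -mulnDl.
case: (leqP (2 * s + 8) (P1 + P2)) => h.
  have : (2 * s + 8) * (s + 1) <= (P1 + P2) * (s + 1) by apply: leq_mul.
  lia.
have e1 : P1 * P1 + 12 * (2 * s) <= P1 * (2 * s) + 7 * P1 + 60 by apply: aux_sq; lia.
have e2 : P2 * P2 + 12 * (2 * s) <= P2 * (2 * s) + 7 * P2 + 60 by apply: aux_sq; lia.
lia.
Qed.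

Lemma rat1 (s t g : nat) : 0 < s -> 2 * s * t <= g * (s + 1) ->
  (t%:R * (2 - 2 / s%:R) <= g%:R :> rat)%R.
Proof.
move=> hs h.
have h2 : 2 * t * s <= g * s + 2 * t by nia.
have hS : (0 < s%:R :> rat)%R by rewrite ltr0n.
rewrite -(ler_pM2r hS).
have -> : (t%:R * (2 - 2 / s%:R) * s%:R = 2 * t%:R * s%:R - 2 * t%:R :> rat)%R.
  by field; rewrite pnatr_eq0 -lt0n.
have h' : ((2 * t * s)%:R <= (g * s + 2 * t)%:R :> rat)%R by rewrite ler_nat.
rewrite !natrD !natrM in h'; lra.
Qed.

Lemma rat2 (s t g : nat) : 0 < s -> 2 * s * t + 4 * (s + 1) <= g * (s + 1) ->
  ((2 * t)%:R * (1 - 1 / s%:R) + 4 <= g%:R :> rat)%R.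
Proof.
move=> hs h.
have h2 : 2 * t * s + 4 * s <= g * s + 2 * t by nia.
have hS : (0 < s%:R :> rat)%R by rewrite ltr0n.
rewrite -(ler_pM2r hS).
have -> : (((2 * t)%:R * (1 - 1 / s%:R) + 4) * s%:R = 2 * t%:R * s%:R - 2 * t%:R + 4 * s%:R :> rat)%R.
  by rewrite natrM; field; rewrite pnatr_eq0 -lt0n.
have h' : ((2 * t * s + 4 * s)%:R <= (g * s + 2 * t)%:R :> rat)%R by rewrite ler_nat.
rewrite !natrD !natrM in h'; lra.
Qed.
Section Main.
Variables (k n : nat) (f : dom k -> pt n).
Hypothesis finj : injective f.

Definition constr (d : bool) (x y : gedge n) : bool :=
  if d then vconstr f x y else hconstr f x y.
Definition broken (d : bool) (u v : dom k) : bool :=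
  succ d v u && ~~ succ d (f v) (f u).

Lemma constrP d x y :
  reflect (exists u v, [/\ broken d u v, x = eA d (f u) & y = eB d (f v)])
          (constr d x y).
Proof.
case: d; rewrite /constr /vconstr /hconstr /broken /succ /cd /od /eA /eB /=.
  apply: (iffP existsP) => [[u /existsP[v /and5P[h1 h2 h3 /eqP h4 /eqP h5]]]|[u [v [/andP[/andP[h1 h2] h3] -> ->]]]].
    by exists u, v; split; rewrite // h1 h2 /= [X in ~~ X]andbC.
  exists u; apply/existsP; exists v; rewrite h1 h2 !eqxx andbT /=.
  by rewrite andbT [X in ~~ X]andbC.
apply: (iffP existsP) => [[u /existsP[v /and5P[h1 h2 h3 /eqP h4 /eqP h5]]]|[u [v [/andP[/andP[h1 h2] h3] -> ->]]]].
  by exists u, v; split; rewrite // h1 h2.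
by exists u; apply/existsP; exists v; rewrite h1 h2 h3 !eqxx.
Qed.

Lemma constr_irr d x : constr d x x = false.
Proof.
apply/negP => /constrP[u [v [/andP[_ h] e1 e2]]].
by move: h; rewrite -eAB -e1 -e2 eqxx.
Qed.

Lemma GadjE x y : Gadj f x y =
  [|| constr false x y, constr false y x, constr true x y | constr true y x].
Proof. by []. Qed.

Lemma Gadj_sym : symmetric (Gadj f).
Proof.
move=> x y; rewrite !GadjE.
by apply/idP/idP => /or4P[] H; rewrite H ?orbT.
Qed.

Lemma Gadj_irr x : Gadj f x x = false.
Proof. by rewrite GadjE !constr_irr. Qed.

Lemma Gcomps_part : partition (Gcomps f) (Gverts f).
Proof.
apply: (@equivalence_partitionP _ (connect (Gadj f))).
move=> x y z _ _ _; split; first exact: connect0.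
move=> cxy; apply/idP/idP => h.
  by apply: connect_trans h; rewrite (sym_connect_sym Gadj_sym).
exact: connect_trans cxy h.
Qed.

Lemma comps_card : 2 * #|Gcomps f| <= #|Gverts f|.
Proof.
rewrite (card_partition Gcomps_part) mulnC -sum_nat_const.
apply: leq_sum => C /imsetP[x xV ->].
move: (xV); rewrite inE => /existsP[y hxy].
have yV : y \in Gverts f by rewrite inE; apply/existsP; exists x; rewrite Gadj_sym.
have hne : x != y by apply: contraTneq hxy => ->; rewrite Gadj_irr.
rewrite (cardsD1 x) inE xV connect0 /= add1n ltnS card_gt0.
apply/set0Pn; exists y; apply/setD1P; split; first by rewrite eq_sym.
by apply/setIdP; split => //; exact: connect1.
Qed.

Lemma gamma_ge : #|Gverts f| <= 2 * gamma f.
Proof. have := comps_card; rewrite /gamma; lia. Qed.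

Definition Vd (d : bool) : {set gedge n} :=
  [set x | [exists y, constr d x y || constr d y x]].

Lemma Vd_first d x : x \in Vd d -> x.1.1 = d.
Proof.
rewrite inE => /existsP[y /orP[] /constrP[u [v [_ h1 h2]]]].
  by rewrite h1 eA1.
by rewrite h2 eB1.
Qed.

Lemma Vd_sub d : Vd d \subset Gverts f.
Proof.
apply/subsetP => x; rewrite !inE => /existsP[y h]; apply/existsP; exists y.
by rewrite GadjE; case: d h => /orP[]->; rewrite ?orbT.
Qed.

Lemma card_V : #|Vd false| + #|Vd true| <= #|Gverts f|.
Proof.
rewrite -cardsUI.
have -> : Vd false :&: Vd true = set0.
  apply/setP => x; rewrite in_setI in_set0; apply/negP => /andP[h1 h2].
  by have := Vd_first h1; rewrite (Vd_first h2).
rewrite cards0 addn0; apply: subset_leq_card.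
by rewrite subUset !Vd_sub.
Qed.

Definition Lst d := [set v : dom k | [exists u, broken d u v]].
Definition Rst d := [set u : dom k | [exists v, broken d u v]].
Definition RSd d := [set v : dom k | ((cd d v : nat) == 0) || (v \in Lst d)].
Definition IRS d := [set p in img f | [forall q in img f, ~~ succ d p q]].

Lemma Lst_Rst d : #|Lst d| <= #|Rst d|.
Proof.
pose nxt u := odflt u [pick v | broken d u v].
apply: leq_trans (leq_imset_card nxt (Rst d)).
apply: subset_leq_card; apply/subsetP => v; rewrite inE => /existsP[u huv].
apply/imsetP; exists u; first by rewrite inE; apply/existsP; exists v.
rewrite /nxt; case: pickP => [w hw | /(_ v)]; last by rewrite huv.
by apply: (succ_uniq_l (andP huv).1 (andP hw).1).
Qed.

Lemma RSd_card d : #|RSd d| <= 2 * k + 1 + #|Lst d|.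
Proof.
pose Z0 := [set v : dom k | (cd d v : nat) == 0].
have hZ : #|Z0| <= 2 * k + 1.
  rewrite -(card_in_imset (f := @od d _)); last first.
    move=> u v; rewrite !inE => /eqP h1 /eqP h2 h3.
    by apply: (pair_eqc (d:=d)) => //; apply: val_inj; rewrite /= h1 h2.
  by apply: leq_trans (max_card _) _; rewrite card_ord.
apply: leq_trans (leq_add hZ (leqnn #|Lst d|)).
apply: leq_trans (leq_card_setU _ _); apply: subset_leq_card.
by apply/subsetP => v; rewrite !inE.
Qed.

Lemma count_dir d : #|RSd d| + #|IRS d| <= #|Vd d| + 2 * (2 * k + 1).
Proof.
pose As := [set eB d (f v) | v in Lst d].
pose Bs := [set eA d (f u) | u in Rst d].
have hA : #|As| = #|Lst d|.
  by apply: card_imset => x y /eB_inj /finj.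
have hB : #|Bs| = #|Rst d|.
  by apply: card_imset => x y /eA_inj /finj.
have hAB : As :|: Bs \subset Vd d.
  rewrite subUset; apply/andP; split; apply/subsetP => x /imsetP[v];
    rewrite inE => /existsP[u huv] ->; rewrite inE; apply/existsP.
    by exists (eA d (f u)); apply/orP; right; apply/constrP; exists u, v.
  by exists (eB d (f u)); apply/orP; left; apply/constrP; exists v, u.
pose X := [set v : dom k | f v \in IRS d].
pose Y := [set v in Lst d | eB d (f v) \in Bs].
have hXY : [disjoint X & Y].
  rewrite -setI_eq0; apply/eqP/setP => v; rewrite !inE; apply/negP.
  case/andP => /andP[_ /forall_inP hall] /andP[_ /imsetP[u _ he]].
  have : succ d (f v) (f u) by rewrite -eAB he.
  by move: (hall (f u)); rewrite /img imset_f // => /(_ isT) /negbTE ->.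
have hXR : X :|: Y \subset RSd d.
  rewrite subUset; apply/andP; split; apply/subsetP => v; rewrite !inE; last first.
    by case/andP => -> _; rewrite orbT.
  case/andP => _ /forall_inP hall.
  case: (posnP (cd d v)) => [// | hpos]; apply/orP; right.
  have [u hu] := pred_ex hpos.
  apply/existsP; exists u; rewrite /broken hu /=.
  by apply: hall; rewrite /img imset_f.
have hIRS : #|IRS d| <= #|X|.
  apply: leq_trans (leq_imset_card f X); apply: subset_leq_card.
  apply/subsetP => p hp; move: (hp); rewrite inE /img => /andP[/imsetP[v _ pv] _].
  by rewrite pv imset_f // inE -pv.
have hAB2 : #|As :&: Bs| <= #|Y|.
  apply: leq_trans (leq_imset_card (fun v => eB d (f v)) Y); apply: subset_leq_card.
  apply/subsetP => x; rewrite inE => /andP[/imsetP[v hv ->] hb].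
  by apply: imset_f; rewrite inE hv hb.
have hXY2 : #|X| + #|Y| <= #|RSd d|.
  by rewrite -cardsUI (disjoint_setI0 hXY) cards0 addn0 subset_leq_card.
have hV : #|As| + #|Bs| <= #|Vd d| + #|As :&: Bs|.
  by rewrite -cardsUI leq_add2r subset_leq_card.
have h1 := Lst_Rst d.
have h2 := RSd_card d.
lia.
Qed.
Lemma imgadj_sym : symmetric (imgadj f).
Proof. by move=> p q; rewrite /imgadj gridadj_sym andbCA. Qed.

Lemma tiles_part : partition (tiles f) (img f).
Proof.
apply: (@equivalence_partitionP _ (connect (imgadj f))).
move=> x y z _ _ _; split; first exact: connect0.
move=> cxy; apply/idP/idP => h.
  by apply: connect_trans h; rewrite (sym_connect_sym imgadj_sym).
exact: connect_trans cxy h.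
Qed.

Lemma tile_sub T : T \in tiles f -> T \subset img f.
Proof.
move=> hT; have /and3P[/eqP hc _ _] := tiles_part.
by rewrite -hc; apply: bigcup_sup.
Qed.

Lemma tile_closed T p q :
  T \in tiles f -> p \in T -> q \in img f -> gridadj p q -> q \in T.
Proof.
move=> hT hp hq hg; move: (hT) hp => /imsetP[x hx ->].
rewrite !inE => /andP[hpi hxp]; rewrite hq /=.
by apply: connect_trans hxp (connect1 _); rewrite /imgadj hpi hq.
Qed.

Lemma tile_ne0 T : T \in tiles f -> 0 < #|T|.
Proof.
move=> hT; have /and3P[_ _ h0] := tiles_part.
by rewrite card_gt0; apply: contraNneq h0 => <-.
Qed.

Lemma one_tile p : p \in img f -> \sum_(T in tiles f) (p \in T : nat) = 1.
Proof.
move=> hp; have /and3P[/eqP hc htriv _] := tiles_part.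
move: (hp); rewrite -hc => /bigcupP[T0 hT0 hpT0].
rewrite (bigD1 T0) //= hpT0 big1 // => T /andP[hT hne].
have := (trivIsetP htriv) T T0 hT hT0 hne.
by move/disjointFl => /(_ _ hpT0) ->.
Qed.

Lemma sum_tiles (X : finType) (A : {set X}) (g : X -> pt n) :
  (forall x, x \in A -> g x \in img f) ->
  \sum_(T in tiles f) #|[set x in A | g x \in T]| = #|A|.
Proof.
move=> hg.
have e : forall T : {set pt n}, #|[set x in A | g x \in T]| = \sum_(x in A) (g x \in T : nat).
  move=> T; rewrite -sum1_card big_mkcond [RHS]big_mkcond.
  by apply: eq_bigr => x _; rewrite inE; case: (x \in A); case: (g x \in T).
rewrite (eq_bigr _ (fun T _ => e T)) exchange_big /= -sum1_card.
by apply: eq_bigr => x hx; rewrite one_tile // hg.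
Qed.

Definition DT (T : {set pt n}) := [set u : dom k | f u \in T].
Definition rho d (T : {set pt n}) := #|[set od d u | u in DT T]|.
Definition hh d (T : {set pt n}) := #|[set od d p | p in T]|.

Lemma rho_le d T : T \in tiles f -> rho d T <= #|[set u in RSd d | f u \in T]|.
Proof.
move=> hT.
apply: leq_trans (leq_imset_card (@od d _) _); apply: subset_leq_card.
apply/subsetP => y /imsetP[u]; rewrite inE => hu ->.
suff : forall m (u : dom k), cd d u <= m -> f u \in T ->
    exists2 u', u' \in [set u in RSd d | f u \in T] & od d u' = od d u.
  by case/(_ _ u (leqnn _) hu) => u' h1 <-; apply: imset_f.
elim => [|m IH] {hu} u hle hu.
  by exists u => //; rewrite !inE hu andbT; move: hle; rewrite leqn0 => ->.
case hR: (u \in RSd d); first by exists u => //; rewrite inE hR hu.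
move/negbT: hR; rewrite inE negb_or => /andP[hc hL].
have hpos : 0 < cd d u by rewrite lt0n.
have [w hw] := pred_ex hpos.
have hs : succ d (f u) (f w).
  apply: contraNT hL => hn; rewrite ?inE; apply/existsP; exists w.
  by rewrite /broken hw hn.
have hwT : f w \in T.
  apply: (tile_closed hT hu); first by rewrite /img imset_f.
  by rewrite gridadj_sym; apply: succ_adj hs.
case: (IH w _ hwT) => [|u' h1 h2].
  by move: hw hle => /andP[/eqP h1 _]; rewrite h1 ltnS.
by exists u' => //; rewrite h2; move: hw => /andP[_ /eqP].
Qed.

Lemma hh_le d T : T \in tiles f -> hh d T <= #|[set p in IRS d | p \in T]|.
Proof.
move=> hT.
apply: leq_trans (leq_imset_card (@od d _) _); apply: subset_leq_card.
apply/subsetP => y /imsetP[p hp ->].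
suff : forall m (p : pt n), cd d p <= m -> p \in T ->
    exists2 p', p' \in [set p in IRS d | p \in T] & od d p' = od d p.
  by case/(_ _ p (leqnn _) hp) => p' h1 <-; apply: imset_f.
have hsub := subsetP (tile_sub hT).
elim => [|m IH] {hp} p hle hp.
  exists p => //; rewrite !inE hp andbT hsub //=.
  apply/forall_inP => q _; rewrite /succ; move: hle; rewrite leqn0 => /eqP ->.
  by [].
case hR: (p \in IRS d); first by exists p => //; rewrite inE hR hp.
move: hR; rewrite inE hsub //= => /negbT /forall_inPn[q hq hs].
rewrite negbK in hs.
have hqT : q \in T.
  by apply: (tile_closed hT hp hq); rewrite gridadj_sym; apply: succ_adj hs.
case: (IH q _ hqT) => [|p' h1 h2].
  by move: hs hle => /andP[/eqP h1 _]; rewrite h1 ltnS.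
by exists p' => //; rewrite h2; move: hs => /andP[_ /eqP].
Qed.

Lemma tile_card_DT T : T \in tiles f -> #|T| = #|DT T|.
Proof.
move=> hT; rewrite -(card_imset _ finj); apply: eq_card => p.
apply/idP/imsetP => [hp | [u]].
  by move: (subsetP (tile_sub hT) p hp) => /imsetP[u _ pu]; exists u; rewrite // inE -pu.
by rewrite inE => h ->.
Qed.

Lemma tile_card_rho T : T \in tiles f -> #|T| <= rho true T * rho false T.
Proof.
move=> hT; rewrite tile_card_DT // /rho -cardsX; apply: subset_leq_card.
by apply/subsetP => u hu; rewrite inE /=; apply/andP; split; apply: imset_f.
Qed.

Lemma tile_card_hh T : T \in tiles f -> #|T| <= hh true T * hh false T.
Proof.
move=> hT; rewrite /hh -cardsX; apply: subset_leq_card.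
by apply/subsetP => u hu; rewrite inE /=; apply/andP; split; apply: imset_f.
Qed.

Lemma rho_le_s d T : rho d T <= 2 * k + 1.
Proof. by rewrite /rho; apply: leq_trans (max_card _) _; rewrite card_ord. Qed.

Lemma sum_dir d :
  \sum_(T in tiles f) (rho d T + hh d T) <= #|Vd d| + 2 * (2 * k + 1).
Proof.
apply: leq_trans (count_dir d).
rewrite big_split /=; apply: leq_add.
  rewrite -(sum_tiles (A := RSd d) (g := f)); last by move=> x _; rewrite /img imset_f.
  by apply: leq_sum => T hT; apply: rho_le.
rewrite -(sum_tiles (A := IRS d) (g := id)); last by move=> x; rewrite inE => /andP[].
by apply: leq_sum => T hT; apply: hh_le.
Qed.
Lemma img_card : #|img f| = (2 * k + 1) * (2 * k + 1).
Proof. by rewrite /img card_imset // card_prod card_ord. Qed.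

Lemma sum_m : \sum_(T in tiles f) #|T| = (2 * k + 1) * (2 * k + 1).
Proof.
rewrite -img_card -(sum_tiles (A := img f) (g := id)) //.
apply: eq_bigr => T hT; apply: eq_card => p; rewrite inE andbC.
by case hp: (p \in T) => //=; rewrite (subsetP (tile_sub hT)).
Qed.

Definition Pt T := rho false T + rho true T.
Definition Qt T := minn (hh false T + hh true T) (2 * (2 * k + 1)).

Lemma PQ_sum : \sum_(T in tiles f) (Pt T + Qt T) <= 2 * gamma f + 4 * (2 * k + 1).
Proof.
apply: (@leq_trans (\sum_(T in tiles f) ((rho false T + hh false T) + (rho true T + hh true T)))).
  apply: leq_sum => T _; rewrite /Pt /Qt.
  have := geq_minl (hh false T + hh true T) (2 * (2 * k + 1)); lia.
rewrite big_split /=.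
have h0 := sum_dir false; have h1 := sum_dir true.
apply: leq_trans (leq_add h0 h1) _.
have := card_V; have := gamma_ge; lia.
Qed.

Lemma tile_props T : T \in tiles f ->
  [/\ 2 <= Pt T, Pt T <= 2 * (2 * k + 1) & 4 * #|T| <= Pt T * Pt T] /\
  [/\ 2 <= Qt T, Qt T <= 2 * (2 * k + 1) & 4 * #|T| <= Qt T * Qt T].
Proof.
move=> hT.
have hm := tile_ne0 hT.
have hr := tile_card_rho hT.
have hh := tile_card_hh hT.
have r1 := rho_le_s true T; have r2 := rho_le_s false T.
have hms : #|T| <= (2 * k + 1) * (2 * k + 1).
  by apply: leq_trans hr _; apply: leq_mul.
have [a1 a2 a3] := arith_ab hm hr r1 r2.
have hk : 1 <= 2 * k + 1 by lia.
have [b1 b2 b3] := arith_min hm hh hms hk.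
by rewrite /Pt /Qt addnC; split; split => //; rewrite addnC.
Qed.

Lemma main1 t : #|tiles f| = t.+1 ->
  2 * (2 * k + 1) * t <= gamma f * ((2 * k + 1) + 1).
Proof.
move=> ht.
set s := 2 * k + 1.
have H : \sum_(T in tiles f) ((2 * #|T| + 2 * s) + (2 * #|T| + 2 * s))
         <= \sum_(T in tiles f) (Pt T + Qt T) * (s + 1).
  apply: leq_sum => T hT; have [[p1 p2 p3] [q1 q2 q3]] := tile_props hT.
  rewrite mulnDl; apply: leq_add; exact: arith1.
have eL : \sum_(T in tiles f) ((2 * #|T| + 2 * s) + (2 * #|T| + 2 * s))
          = 4 * \sum_(T in tiles f) #|T| + #|tiles f| * (4 * s).
  rewrite -sum_nat_const big_distrr -big_split /=.
  by apply: eq_bigr => T _; lia.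
have eR : \sum_(T in tiles f) (Pt T + Qt T) * (s + 1)
          = (\sum_(T in tiles f) (Pt T + Qt T)) * (s + 1).
  by rewrite big_distrl.
rewrite eL eR sum_m ht in H.
have Hm : (\sum_(T in tiles f) (Pt T + Qt T)) * (s + 1) <= (2 * gamma f + 4 * s) * (s + 1).
  by apply: leq_mul => //; apply: PQ_sum.
lia.
Qed.
Lemma sum_two (F G : {set pt n} -> nat) T1 T2 c :
  T1 \in tiles f -> T2 \in tiles f -> T1 != T2 ->
  (forall T, T \in tiles f -> G T <= F T) ->
  G T1 + G T2 + c <= F T1 + F T2 ->
  \sum_(T in tiles f) G T + c <= \sum_(T in tiles f) F T.
Proof.
move=> h1 h2 hne hGF h12.
rewrite (bigD1 T1) // [X in _ <= X](bigD1 T1) //=.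
rewrite [\sum_(i | _ && (i != T1)) G i](bigD1 T2) /=; last by rewrite h2 eq_sym.
rewrite [\sum_(i | _ && (i != T1)) F i](bigD1 T2) /=; last by rewrite h2 eq_sym.
have : \sum_(i | (i \in tiles f) && (i != T1) && (i != T2)) G i <=
       \sum_(i | (i \in tiles f) && (i != T1) && (i != T2)) F i.
  by apply: leq_sum => T /andP[/andP[hT _] _]; apply: hGF.
move=> hrest; rewrite !addnA addnAC; exact: leq_add h12 hrest.
Qed.

Lemma main2 t T1 T2 : #|tiles f| = t.+1 ->
  T1 \in tiles f -> T2 \in tiles f -> T1 != T2 -> 35 < #|T1| -> 35 < #|T2| ->
  2 * (2 * k + 1) * t + 4 * ((2 * k + 1) + 1) <= gamma f * ((2 * k + 1) + 1).
Proof.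
move=> ht h1 h2 hne m1 m2.
set s := 2 * k + 1.
have hdis : #|T1| + #|T2| <= s * s.
  rewrite -img_card -cardsUI.
  have /and3P[_ htriv _] := tiles_part.
  have := (trivIsetP htriv) T1 T2 h1 h2 hne; rewrite -setI_eq0 => /eqP ->.
  rewrite cards0 addn0; apply: subset_leq_card.
  by rewrite subUset !tile_sub.
have [[p1 p2 p3] [q1 q2 q3]] := tile_props h1.
have [[r1 r2 r3] [w1 w2 w3]] := tile_props h2.
have HP : \sum_(T in tiles f) (2 * #|T| + 2 * s) + (4 * s + 4)
          <= \sum_(T in tiles f) Pt T * (s + 1).
  apply: sum_two h1 h2 hne _ _.
    by move=> T hT; have [[a1 a2 a3] _] := tile_props hT; exact: arith1.
  by apply: arith_pair.
have HQ : \sum_(T in tiles f) (2 * #|T| + 2 * s) + (4 * s + 4)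
          <= \sum_(T in tiles f) Qt T * (s + 1).
  apply: sum_two h1 h2 hne _ _.
    by move=> T hT; have [_ [a1 a2 a3]] := tile_props hT; exact: arith1.
  by apply: arith_pair.
have eL : \sum_(T in tiles f) (2 * #|T| + 2 * s)
          = 2 * \sum_(T in tiles f) #|T| + #|tiles f| * (2 * s).
  rewrite -sum_nat_const big_distrr -big_split /=.
  by apply: eq_bigr => T _; lia.
have eR : \sum_(T in tiles f) Pt T * (s + 1) + \sum_(T in tiles f) Qt T * (s + 1)
          = (\sum_(T in tiles f) (Pt T + Qt T)) * (s + 1).
  by rewrite big_distrl -big_split /=; apply: eq_bigr => T _; rewrite mulnDl.
have Hm : (\sum_(T in tiles f) (Pt T + Qt T)) * (s + 1) <= (2 * gamma f + 4 * s) * (s + 1).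
  by apply: leq_mul => //; apply: PQ_sum.
have := leq_add HP HQ; rewrite eR eL sum_m ht.
lia.
Qed.

End Main.

Theorem lemma4p1 (k n t : nat) (f : dom k -> pt n) :
  1 <= k -> injective f -> 1 <= t -> #|tiles f| = t.+1 ->
  ((t%:R * (2 - 2 / (2 * k + 1)%:R) <= (gamma f)%:R :> rat)%R /\
   ((exists T1 T2, [/\ T1 \in tiles f, T2 \in tiles f, T1 != T2,
                       35 < #|T1| & 35 < #|T2|]) ->
    ((2 * t)%:R * (1 - 1 / (2 * k + 1)%:R) + 4 <= (gamma f)%:R :> rat)%R)).
Proof.
move=> hk finj ht hT; split.
  apply: rat1; first by rewrite addn1.
  by have := main1 finj hT.
move=> [T1 [T2 [h1 h2 hne m1 m2]]].
apply: rat2; first by rewrite addn1.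
by have := main2 finj hT h1 h2 hne m1 m2.
Qed.
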